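(* Let $k\ge1$. In base $2$, among all odd $k$-digit numbers $n$ (i.e. odd $n$ with $2^{k-1}\le n<2^k$), $d_2(n)$ has a unique maximum at $n=2^k-1$ (binary $11\ldots1$).
   Context: Base-$2$ lunar product: for $x=\sum_ix_i2^i$, $y=\sum_jy_j2^j$ with binary digits $x_i,y_j\in\{0,1\}$, $x\otimes y=\sum_n(\max_{i+j=n}\min(x_i,y_j))2^n$. For a positive integer $n$, $d_2(n)$ is the number of positive integers $m$ such that $m\otimes q=n$ for some integer $q$. *)

(* Defs.v *)
From mathcomp Require Import all_boot.
Set Implicit Arguments. Unset Strict Implicit. Unset Printing Implicit Defensive.

Definition bit2 (i x : nat) : bool := odd (x %/ 2 ^ i).

(* Base-2 lunar product: digit n = max_{i+j=n} min(x_i, y_j); for 0/1 digits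
   max = boolean or, min = boolean and.  All nonzero digit positions are
   < x + y, so summing over n < x + y covers every digit. *)
Definition lunar_mul2 (x y : nat) : nat :=
  \sum_(n < x + y) [exists i : 'I_n.+1, bit2 i x && bit2 (n - i) y] * 2 ^ n.

(* For n > 0 any such m, q satisfy m <= n and q <= n (since q <> 0 and
   m (x) q dominates m shifted by a set bit of q, and symmetrically), so the
   search ranges 'I_n.+1 lose nothing. *)
Definition d2 (n : nat) : nat :=
  #|[set m : 'I_n.+1 | (0 < m) && [exists q : 'I_n.+1, lunar_mul2 m q == n]]|.

(* Main.v *)
Require Import Defs.
From mathcomp Require Import all_boot zify.
Set Implicit Arguments. Unset Strict Implicit. Unset Printing Implicit Defensive.

Definition mk (P : nat -> bool) (K : nat) : nat := \sum_(i < K) P i * 2 ^ i.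

Lemma bit2S i x : bit2 i.+1 x = bit2 i (x %/ 2).
Proof. by rewrite /bit2 expnS divnMA. Qed.

Lemma bit20 x : bit2 0 x = odd x.
Proof. by rewrite /bit2 expn0 divn1. Qed.

Lemma mk_rec P K : mk P K.+1 = P 0 + 2 * mk (fun i => P i.+1) K.
Proof.
rewrite /mk big_ord_recl /= expn0 muln1 big_distrr /=; congr (_ + _).
by apply: eq_bigr => i _; rewrite /bump /= add1n expnS mulnCA.
Qed.

Lemma bit2_mk P K j : bit2 j (mk P K) = P j && (j < K).
Proof.
elim: K P j => [|K IH] P j.
  by rewrite /mk big_ord0 /bit2 div0n andbF.
rewrite mk_rec; case: j => [|j].
  rewrite bit20 oddD oddM /= addbF andbT; by case: (P 0).
rewrite bit2S (_ : (P 0 + 2 * mk (fun i => P i.+1) K) %/ 2 = mk (fun i => P i.+1) K).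
  by rewrite IH.
rewrite addnC mulnC divnMDl // divn_small ?addn0 //; by case: (P 0).
Qed.

Lemma mk_lt P K : mk P K < 2 ^ K.
Proof.
elim: K P => [|K IH] P; first by rewrite /mk big_ord0.
rewrite mk_rec expnS; have := IH (fun i => P i.+1); have : P 0 <= 1 by case: (P 0).
lia.
Qed.

Lemma mk_all K : mk (fun _ => true) K = 2 ^ K - 1.
Proof.
elim: K => [|K IH]; first by rewrite /mk big_ord0.
rewrite mk_rec IH expnS; have : 0 < 2 ^ K by rewrite expn_gt0.
lia.
Qed.

Lemma bits_inj x y : (forall i, bit2 i x = bit2 i y) -> x = y.
Proof.
move=> H; have [n] : exists n, (x < n) && (y < n) by exists (x + y).+1; lia.
elim: n x y H => [|n IH] x y H; first by [].
case/andP=> hx hy.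
case: n IH hx hy => [|n] IH hx hy; first by lia.
have h0 := H 0; rewrite !bit20 in h0.
have e : x %/ 2 = y %/ 2.
  apply: IH; first by move=> i; rewrite -!bit2S.
  lia.
by rewrite (divn_eq x 2) (divn_eq y 2) e !modn2 h0.
Qed.

Lemma bit2_big x i : x < 2 ^ i -> bit2 i x = false.
Proof. by move=> h; rewrite /bit2 divn_small. Qed.

Lemma bit2_lt i x : bit2 i x -> i < x.
Proof.
move=> h; rewrite ltnNge; apply/negP => hx; move: h; rewrite bit2_big //.
by apply: leq_ltn_trans hx (ltn_expl _ _).
Qed.

Lemma lunarP x y j : reflect (exists i, [/\ i <= j, bit2 i x & bit2 (j - i) y])
  (bit2 j (lunar_mul2 x y)).
Proof.
change (bit2 j (lunar_mul2 x y)) with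
  (bit2 j (mk (fun n => [exists i : 'I_n.+1, bit2 i x && bit2 (n - i) y]) (x+y))).
rewrite bit2_mk; apply: (iffP idP).
  case/andP=> /existsP [i /andP [h1 h2]] _; exists i; split => //.
  by rewrite -ltnS ltn_ord.
case=> i [hi h1 h2]; apply/andP; split.
  by apply/existsP; exists (Ordinal (hi : i < j.+1)); rewrite h1 h2.
have := bit2_lt h1; have := bit2_lt h2; lia.
Qed.

Lemma bit2_0 i : bit2 i 0 = false.
Proof. by rewrite /bit2 div0n. Qed.

Lemma top_bit m k : 0 < m -> m < 2 ^ k ->
  exists a, [/\ bit2 a m, a < k & forall j, bit2 j m -> j <= a].
Proof.
move=> m0 mk.
have hb : forall j, bit2 j m -> j < k.
  move=> j hj; rewrite ltnNge; apply/negP => kj; move: hj.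
  by rewrite bit2_big // (leq_trans mk) // leq_exp2l.
have [/existsP [i hi] | hn] := boolP [exists i : 'I_k, bit2 i m].
  have ex : exists j, bit2 j m by exists i.
  have hbd : forall j, bit2 j m -> j <= k by move=> j /hb /ltnW.
  case: (ex_maxnP ex hbd) => a ha hmax; exists a; split => //; exact: hb.
exfalso; have : m = 0; last by lia.
apply: bits_inj => j; rewrite bit2_0; apply/negP => hj.
move/existsPn: hn => /(_ (Ordinal (hb _ hj))) /=; by rewrite hj.
Qed.

Section Main.
Variables (n k : nat).
Hypothesis k1 : 1 <= k.
Hypothesis Hn : forall j, bit2 j n -> j < k.
Hypothesis H0 : bit2 0 n.

Lemma div_sub m q : lunar_mul2 m q = n -> bit2 0 m /\ forall i, bit2 i m -> bit2 i n.
Proof.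
move=> e.
have : bit2 0 (lunar_mul2 m q) by rewrite e.
case/lunarP => i [hi h1 h2]; have i0 : i = 0 by lia.
subst i; split => // i hm; rewrite -e; apply/lunarP; exists i; split => //.
by rewrite subnn.
Qed.

Lemma div_q m q a : lunar_mul2 m q = n -> bit2 a m -> forall j, bit2 j q -> a + j < k.
Proof.
move=> e ha j hj; apply: Hn; rewrite -e; apply/lunarP; exists a; split => //.
  lia.
by rewrite addKn.
Qed.

Definition F m i := bit2 i m || (~~ bit2 i n && [exists j : 'I_k, (i <= j) && bit2 j m]).

Lemma hiE m a : a < k -> bit2 a m -> (forall j, bit2 j m -> j <= a) -> forall i,
  [exists j : 'I_k, (i <= j) && bit2 j m] = (i <= a).
Proof.
move=> ak ha hmax i; apply/existsP/idP.
  case=> j /andP [h1 h2]; exact: leq_trans h1 (hmax _ h2).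
by move=> ia; exists (Ordinal ak); rewrite /= ia ha.
Qed.

Lemma main_lunar m q a : lunar_mul2 m q = n -> a < k -> bit2 a m ->
  (forall j, bit2 j m -> j <= a) ->
  lunar_mul2 (mk (F m) k) (mk (fun i => i <= k.-1 - a) k) = 2 ^ k - 1.
Proof.
move=> e ak ha hmax; have [m0 msub] := div_sub e.
have hq := div_q e ha.
have Fe : forall i, F m i = bit2 i m || (~~ bit2 i n && (i <= a)).
  by move=> i; rewrite /F (hiE ak ha hmax).
apply: bits_inj => j; rewrite -mk_all bit2_mk andTb.
apply/lunarP/idP.
  case=> i [hij]; rewrite !bit2_mk Fe => /andP [hF hik] /andP [hc _].
  have : i <= a.
    case/orP: hF => [/hmax //|/andP [_ //]].
  lia.
elim: j => [|j IH] hj.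
  by exists 0; rewrite !bit2_mk Fe m0 /=; split => //; lia.
have [i [hij]] := IH (ltnW hj).
rewrite !bit2_mk => /andP [hFi hik] /andP [hci _].
have [hFj | hFj] := boolP (F m j.+1).
  exists j.+1; rewrite subnn !bit2_mk hFj hj; split => //; lia.
have [hc | hc] := boolP (j.+1 - i <= k.-1 - a).
  exists i; rewrite !bit2_mk hFi hik hc; split => //; lia.
have [aj | ja] := leqP a j.
  exists a; rewrite !bit2_mk Fe ha ak; split => //; lia.
move: hFj; rewrite Fe negb_or => /andP [hm]; rewrite negb_and negbK ja orbF => hn.
have : bit2 j.+1 (lunar_mul2 m q) by rewrite e.
case/lunarP => al [hal ham haq].
have := hq _ haq.
exists al; rewrite !bit2_mk Fe ham; split => //; try lia.
Qed.

End Main.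

Lemma interval_lunar k h : h < k ->
  lunar_mul2 (mk (fun i => i <= h) k) (mk (fun i => i <= k.-1 - h) k) = 2 ^ k - 1.
Proof.
move=> hk; apply: bits_inj => j; rewrite -mk_all bit2_mk andTb.
apply/lunarP/idP.
  case=> i [hij]; rewrite !bit2_mk => /andP [hF hik] /andP [hc _]; lia.
move=> jk; exists (minn j h); rewrite !bit2_mk; split; lia.
Qed.

Lemma recov n k m q : 1 <= k -> (forall j, bit2 j n -> j < k) -> bit2 0 n ->
  lunar_mul2 m q = n -> forall i, bit2 i m = bit2 i (mk (F n k m) k) && bit2 i n.
Proof.
move=> k1 Hn H0 e i; have [_ msub] := div_sub k1 H0 e.
rewrite bit2_mk /F; case: (boolP (bit2 i m)) => hm /=.
  by have hn := msub _ hm; rewrite hn (Hn _ hn).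
by case: (bit2 i n); rewrite ?andbF.
Qed.

Theorem mainTheorem4 (k : nat) : 1 <= k ->
  [/\ odd (2 ^ k - 1), 2 ^ k.-1 <= 2 ^ k - 1 < 2 ^ k &
      forall n : nat, odd n -> 2 ^ k.-1 <= n < 2 ^ k -> n != 2 ^ k - 1 ->
        d2 n < d2 (2 ^ k - 1)].
Proof.
move=> k1.
have pk : 2 ^ k = 2 * 2 ^ k.-1 by rewrite -expnS prednK.
have pk0 : 0 < 2 ^ k.-1 by rewrite expn_gt0.
split.
- rewrite oddB; last by lia.
  by rewrite oddX /= -(prednK k1).
- apply/andP; split; lia.
move=> n nodd /andP [nlo nhi] nN.
have Hn : forall j, bit2 j n -> j < k.
  move=> j hj; rewrite ltnNge; apply/negP => kj; move: hj.
  by rewrite bit2_big // (leq_trans nhi) // leq_exp2l.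
have H0 : bit2 0 n by rewrite bit20.
have Htop : bit2 k.-1 n.
  rewrite /bit2 (_ : n %/ 2 ^ k.-1 = 1) //; apply/eqP; rewrite eqn_leq.
  rewrite leq_divRL // mul1n nlo andbT -ltnS ltn_divLR //; lia.
have [h hk hn] : exists2 h, h < k & ~~ bit2 h n.
  have [/forallP hall | /forallPn [h hh]] := boolP [forall i : 'I_k, bit2 i n].
    exfalso; move/eqP: nN; apply; apply: bits_inj => j.
    rewrite -mk_all bit2_mk andTb; case: (ltnP j k) => jk.
      exact: (hall (Ordinal jk)).
    by apply/negP => /Hn; lia.
  by exists h.
have h0 : 0 < h by case: h hk hn => [|h] //; rewrite H0.
have hk1 : h < k.-1.
  have : h != k.-1 by apply: contraNneq hn => ->.
  lia.
set N := 2 ^ k - 1.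
have NS : N.+1 = 2 ^ k by rewrite /N; lia.
have mkN : forall P, mk P k < N.+1 by move=> P; rewrite NS mk_lt.
pose g (m : 'I_n.+1) : 'I_N.+1 := inord (mk (F n k m) k).
have gE : forall m, nat_of_ord (g m) = mk (F n k m) k by move=> m; rewrite /g inordK.
rewrite /d2.
set Dn := [set m : 'I_n.+1 | _].
set DN := [set m : 'I_N.+1 | _].
have Dinfo : forall m, m \in Dn -> exists q a, [/\ lunar_mul2 m q = n, bit2 a m,
    a < k & forall j, bit2 j m -> j <= a].
  move=> m; rewrite inE => /andP [m0 /existsP [q /eqP e]].
  have [a [ha ak hmax]] := top_bit m0 (leq_ltn_trans (ltnSE (ltn_ord m)) nhi).
  by exists q, a.
have ginj : {in Dn &, injective g}.
  move=> m1 m2 hm1 hm2 e; apply: val_inj; apply: bits_inj => i.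
  have [q1 [a1 [e1 _ _ _]]] := Dinfo _ hm1.
  have [q2 [a2 [e2 _ _ _]]] := Dinfo _ hm2.
  by rewrite (recov k1 Hn H0 e1) (recov k1 Hn H0 e2) -!gE e.
rewrite -(card_in_imset ginj); apply: proper_card; apply/properP; split.
  apply/subsetP => _ /imsetP [m hm ->].
  have [q [a [e ha ak hmax]]] := Dinfo _ hm.
  rewrite inE; apply/andP; split.
    rewrite lt0n; apply/negP => /eqP g0.
    have := bit2_mk (F n k m) k 0; rewrite -gE g0 bit2_0 /F.
    by have [-> _] := div_sub k1 H0 e; rewrite /= k1.
  apply/existsP; exists (inord (mk (fun i => i <= k.-1 - a) k)).
  move: (gE m) => ->; rewrite inordK ?mkN // (main_lunar k1 Hn H0 e) //.
exists (inord (mk (fun i => i <= h) k)).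
  rewrite inE; apply/andP; split.
    rewrite lt0n inordK //; apply/negP => /eqP g0.
    by have := bit2_mk (fun i => i <= h) k 0; rewrite g0 bit2_0; lia.
  apply/existsP; exists (inord (mk (fun i => i <= k.-1 - h) k)).
  by rewrite !inordK // interval_lunar //; lia.
apply/imsetP => [[m hm]] /(congr1 (@nat_of_ord _)); move: (gE m) => ->; rewrite inordK // => ew.
have [q [a [e ha ak hmax]]] := Dinfo _ hm.
have [_ msub] := div_sub k1 H0 e.
have Fe : forall i, F n k m i = bit2 i m || (~~ bit2 i n && (i <= a)).
  by move=> i; rewrite /F (hiE ak ha hmax).
have b1 := bit2_mk (fun i => i <= h) k h.
have b2 := bit2_mk (fun i => i <= h) k a.
rewrite ew !bit2_mk !Fe ha hk ak (negbTE hn) /= in b1 b2.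
have hmh : bit2 h m = false by apply/negP => /msub; rewrite (negbTE hn).
rewrite hmh /= in b1.
have : a = h by lia.
by move=> ah; rewrite ah hmh in ha.
Qed.
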